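(* Fix $\alpha\in(0,1)$ and constants $c_1,c_2,c_3,c_4>0$. There exist $C>0$ and $n_0$ such that for all $n\ge n_0$, every prime $p$ with $c_1n^\alpha\le p\le c_2n^\alpha$, every integer $t\ge c_3p^3$, every $b\in\{0,1\}$, and all integers $a_0,a_1,\dots,a_t$ and $u_0,u_1,\dots,u_t$ with $1\le a_i\le c_4\,p/\log n$ for all $i\in\{1,\dots,t\}$, setting $S=a_0+\sum_{i=1}^ta_ix_i$ and $U=u_0+\sum_{i=1}^tu_ix_i$, $$\Pr_{x\sim\mathrm{Unif}(\{0,1\}^t)}\big[\mathrm{MM}_p(S)\oplus(U\bmod 2)=b\big]\ \ge\ \tfrac12-\tfrac{C}{\log n}.$$
   Context: For odd prime $p$ and integer $a$, $\mathrm{MM}_p(a)=0$ if $(a\bmod p)\in\{0,\dots,(p-1)/2\}$ and $\mathrm{MM}_p(a)=1$ otherwise, where $a\bmod p\in\{0,\dots,p-1\}$. *)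

(* Defs.v *)
From Stdlib Require Import Reals ZArith List Znumtheory.
Import ListNotations.
Open Scope R_scope.

Definition MM (p a : Z) : bool :=
  negb (Z.leb (Z.modulo a p) (Z.div (p - 1) 2)).

(* all vectors in {0,1}^t, each exactly once, as bool lists of length t;
   coordinate x_i (1 <= i <= t) is  nth (i-1) x false *)
Fixpoint bool_vectors (t : nat) : list (list bool) :=
  match t with
  | O => [[]]
  | S k => map (cons false) (bool_vectors k) ++ map (cons true) (bool_vectors k)
  end.

Definition bit (x : list bool) (i : nat) : Z :=
  if nth (i - 1) x false then 1%Z else 0%Z.

Definition lin_form (c : nat -> Z) (t : nat) (x : list bool) : Z :=
  (c 0%nat + fold_right Z.add 0%Z (map (fun i => c i * bit x i)%Z (seq 1 t)))%Z.

Definition prob_unif (t : nat) (P : list bool -> bool) : R :=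
  INR (length (filter P (bool_vectors t))) / 2 ^ t.

(* Main.v *)
Require Import Defs.
From Stdlib Require Import Reals ZArith List Znumtheory Lra Lia.
Import ListNotations.
Open Scope R_scope.

Definition lsum (F : list bool -> R) (l : list (list bool)) : R :=
  fold_right (fun x acc => F x + acc) 0 l.

Lemma lsum_app F l1 l2 : lsum F (l1 ++ l2) = lsum F l1 + lsum F l2.
Proof. induction l1; simpl; [lra|]. unfold lsum in *; simpl; rewrite IHl1; lra. Qed.

Lemma lsum_map F g l : lsum F (map g l) = lsum (fun x => F (g x)) l.
Proof. induction l; simpl; auto. unfold lsum in *; simpl; now rewrite IHl. Qed.

Lemma lsum_ext F G l : (forall x, In x l -> F x = G x) -> lsum F l = lsum G l.
Proof. induction l; simpl; intros H; auto. unfold lsum in *; simpl.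
 rewrite H by auto. rewrite IHl; auto. Qed.

Lemma lsum_plus F G l : lsum (fun x => F x + G x) l = lsum F l + lsum G l.
Proof. induction l; simpl; [lra|]. unfold lsum in *; simpl; rewrite IHl; lra. Qed.

Lemma lsum_scal c F l : lsum (fun x => c * F x) l = c * lsum F l.
Proof. induction l; simpl; [unfold lsum; simpl; lra|]. unfold lsum in *; simpl; rewrite IHl; lra. Qed.

Lemma lsum_abs_le F l M : (forall x, Rabs (F x) <= M) -> Rabs (lsum F l) <= INR (length l) * M.
Proof. intros H. induction l. unfold lsum; simpl; rewrite Rabs_R0; lra.
 unfold lsum in *; cbn [length fold_right]. rewrite S_INR.
 eapply Rle_trans. apply Rabs_triang. specialize (H a). lra. Qed.

Lemma count_lsum (P : list bool -> bool) l :
  INR (length (filter P l)) = lsum (fun x => if P x then 1 else 0) l.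
Proof. induction l; [reflexivity|]. unfold lsum in *; cbn [fold_right filter].
 destruct (P a); cbn [length]; rewrite <- IHl; try rewrite S_INR; lra. Qed.

Lemma bv_length t : length (bool_vectors t) = (2 ^ t)%nat.
Proof. induction t; simpl; auto. rewrite length_app, !length_map, IHt. lia. Qed.

Lemma bv_in t x : In x (bool_vectors t) -> length x = t.
Proof. revert x; induction t; simpl; intros x H.
 destruct H as [<-|[]]; auto.
 apply in_app_or in H; destruct H as [H|H]; apply in_map_iff in H;
 destruct H as [y [<- Hy]]; simpl; auto. Qed.

Fixpoint fsum (f : nat -> R) (n : nat) : R :=
  match n with O => 0 | S m => fsum f m + f m end.

Lemma fsum_ext f g n : (forall i, (i < n)%nat -> f i = g i) -> fsum f n = fsum g n.
Proof. induction n; simpl; intros H; auto. rewrite IHn, H; auto. Qed.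

Lemma fsum_shift f n : fsum f (S n) = f O + fsum (fun i => f (S i)) n.
Proof. induction n; simpl in *; [lra|]. rewrite IHn; lra. Qed.

Lemma fsum_scal c f n : fsum (fun i => c * f i) n = c * fsum f n.
Proof. induction n; simpl; [lra|]. rewrite IHn; lra. Qed.

Lemma lsum_fsum (F : nat -> list bool -> R) n l :
  lsum (fun x => fsum (fun r => F r x) n) l = fsum (fun r => lsum (F r) l) n.
Proof. induction n; simpl. induction l; unfold lsum in *; simpl; auto. rewrite IHl; lra.
 rewrite lsum_plus, IHn; auto. Qed.

Lemma fsum_abs_le f n M : (forall i, (i < n)%nat -> Rabs (f i) <= M) -> Rabs (fsum f n) <= INR n * M.
Proof. induction n; intros H. simpl; rewrite Rabs_R0; lra.
 cbn [fsum]; rewrite S_INR. eapply Rle_trans. apply Rabs_triang.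
 assert (Rabs (fsum f n) <= INR n * M) by (apply IHn; auto).
 specialize (H n ltac:(lia)). lra. Qed.

Lemma fsum_single v m n : (m < n)%nat -> fsum (fun k => if Nat.eqb k m then v else 0) n = v.
Proof. induction n; simpl; intros H; [lia|].
 destruct (Nat.eqb_spec n m).
 - subst. replace (fsum _ m) with 0. lra.
   clear. assert (forall j, (j <= m)%nat -> fsum (fun k => if Nat.eqb k m then v else 0) j = 0).
   { induction j; simpl; intros; auto. rewrite IHj by lia. destruct (Nat.eqb_spec j m); [lia|lra]. }
   rewrite H; auto.
 - rewrite IHn by lia. lra. Qed.

Fixpoint zlin (c : nat -> Z) (k : nat) (x : list bool) : Z :=
  match x with [] => 0%Z | b :: y => ((if b then c k else 0) + zlin c (S k) y)%Z end.
Fixpoint rlin (c : nat -> R) (k : nat) (x : list bool) : R :=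
  match x with [] => 0 | b :: y => (if b then c k else 0) + rlin c (S k) y end.

Lemma lin_aux c x k :
  fold_right Z.add 0%Z (map (fun i => c (i + k)%nat * (if nth i x false then 1 else 0))%Z (seq 0 (length x)))
  = zlin c k x.
Proof. revert k; induction x as [|b y IH]; intros k; simpl; auto.
 rewrite <- seq_shift, map_map. rewrite <- (IH (S k)).
 f_equal. destruct b; lia. f_equal. apply map_ext. intros i. f_equal. f_equal. lia. Qed.

Lemma lin_form_eq c t x : length x = t -> lin_form c t x = (c O + zlin c 1 x)%Z.
Proof. intros <-. unfold lin_form. f_equal. rewrite <- lin_aux. f_equal.
 rewrite <- seq_shift, map_map. apply map_ext. intros i. unfold bit.
 replace (S i - 1)%nat with i by lia. replace (i + 1)%nat with (S i) by lia. reflexivity. Qed.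

Lemma IZR_zlin c k x : IZR (zlin c k x) = rlin (fun i => IZR (c i)) k x.
Proof. revert k; induction x as [|b y IH]; intros k; simpl; auto.
 rewrite plus_IZR, IH. destruct b; reflexivity. Qed.

Lemma rlin_lin al be f g k x :
  rlin (fun i => al * f i + be * g i) k x = al * rlin f k x + be * rlin g k x.
Proof. revert k; induction x as [|b y IH]; intros k; simpl; [lra|].
 rewrite IH. destruct b; lra. Qed.

Fixpoint prodabs (th : nat -> R) (k t : nat) : R :=
  match t with O => 1 | S t' => Rabs (cos (th k / 2)) * prodabs th (S k) t' end.

Lemma cos_avg_bound th t : forall k phi,
  Rabs (lsum (fun x => cos (phi + rlin th k x)) (bool_vectors t)) <= 2 ^ t * prodabs th k t.
Proof. induction t; intros k phi; simpl.
 - unfold lsum; simpl. rewrite Rplus_0_r, Rplus_0_r. pose proof (COS_bound phi). apply Rabs_le; lra.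
 - rewrite lsum_app, !lsum_map. simpl.
   rewrite <- lsum_plus.
   rewrite (lsum_ext _ (fun y => 2 * cos (th k / 2) * cos (phi + th k / 2 + rlin th (S k) y))).
   2:{ intros y _. rewrite form1. replace ((phi + (0 + rlin th (S k) y) - (phi + (th k + rlin th (S k) y))) / 2) with (- (th k / 2)) by lra.
       rewrite cos_neg. f_equal. f_equal. lra. }
   rewrite lsum_scal. rewrite Rabs_mult, Rabs_mult. rewrite (Rabs_right 2) by lra.
   specialize (IHt (S k) (phi + th k / 2)).
   pose proof (Rabs_pos (cos (th k / 2))).
   replace (2 * 2 ^ t * (Rabs (cos (th k / 2)) * prodabs th (S k) t)) with
     (2 * Rabs (cos (th k / 2)) * (2 ^ t * prodabs th (S k) t)) by ring.
   apply Rmult_le_compat_l; [lra|]. exact IHt. Qed.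

Lemma prodabs_le th rho t : forall k, 0 <= rho ->
  (forall i, (k <= i < k + t)%nat -> Rabs (cos (th i / 2)) <= rho) -> prodabs th k t <= rho ^ t.
Proof. induction t; intros k Hr H; simpl; [lra|].
 apply Rmult_le_compat. apply Rabs_pos.
 clear IHt H. revert k. induction t; intros k; simpl; [lra|]. apply Rmult_le_pos; auto. apply Rabs_pos.
 apply H; lia. apply IHt; auto. intros i Hi; apply H; lia. Qed.

Lemma cos2piZ x q : cos (x + 2 * PI * IZR q) = cos x.
Proof. destruct q as [|n|n].
 - rewrite Rmult_0_r, Rplus_0_r; auto.
 - rewrite <- (positive_nat_Z n), <- INR_IZR_INZ.
   rewrite <- (cos_period x (Pos.to_nat n)). f_equal; ring.
 - rewrite <- Pos2Z.opp_pos, opp_IZR, <- (positive_nat_Z n), <- INR_IZR_INZ.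
   rewrite <- (cos_period (x + 2 * PI * - INR (Pos.to_nat n)) (Pos.to_nat n)). f_equal; ring. Qed.

Lemma sin2piZ x q : sin (x + 2 * PI * IZR q) = sin x.
Proof. destruct q as [|n|n].
 - rewrite Rmult_0_r, Rplus_0_r; auto.
 - rewrite <- (positive_nat_Z n), <- INR_IZR_INZ.
   rewrite <- (sin_period x (Pos.to_nat n)). f_equal; ring.
 - rewrite <- Pos2Z.opp_pos, opp_IZR, <- (positive_nat_Z n), <- INR_IZR_INZ.
   rewrite <- (sin_period (x + 2 * PI * - INR (Pos.to_nat n)) (Pos.to_nat n)). f_equal; ring. Qed.

Lemma cos_pi_Z U : cos (PI * IZR U) = if Z.odd U then -1 else 1.
Proof. rewrite (Z_div_mod_eq_full U 2), Zmod_odd.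
 rewrite Z.add_comm, Z.odd_add_mul_2.
 rewrite plus_IZR, mult_IZR.
 replace (PI * (IZR (if Z.odd U then 1%Z else 0%Z) + IZR 2 * IZR (U / 2)))
  with (PI * IZR (if Z.odd U then 1%Z else 0%Z) + 2 * PI * IZR (U/2)) by ring.
 rewrite cos2piZ. destruct (Z.odd U); simpl.
 rewrite Rmult_1_r; apply cos_PI. rewrite Rmult_0_r; apply cos_0. Qed.

Lemma abs_cos_piZ x q : Rabs (cos (x + PI * IZR q)) = Rabs (cos x).
Proof. rewrite (Z_div_mod_eq_full q 2), Zmod_odd, plus_IZR, mult_IZR.
 replace (x + PI * (IZR 2 * IZR (q / 2) + IZR (if Z.odd q then 1%Z else 0%Z)))
  with (x + PI * IZR (if Z.odd q then 1%Z else 0%Z) + 2 * PI * IZR (q/2)) by ring.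
 rewrite cos2piZ. destruct (Z.odd q); simpl.
 rewrite Rmult_1_r, neg_cos, Rabs_Ropp; auto. rewrite Rmult_0_r, Rplus_0_r; auto. Qed.

Lemma cos_mono_le x y : 0 <= x -> x <= y -> y <= PI -> cos y <= cos x.
Proof. intros. destruct (Req_dec x y). subst; lra. left; apply cos_decreasing_1; lra. Qed.

Lemma cosN p N : (0 < p)%Z -> ~ (2 * p | N)%Z ->
  Rabs (cos (PI * IZR N / (2 * IZR p))) <= cos (PI / (2 * IZR p)).
Proof. intros Hp Hd.
 assert (Hp2 : (0 < 2 * p)%Z) by lia.
 pose proof (Z.mod_pos_bound N _ Hp2) as Hm.
 assert (Hm0 : (N mod (2 * p) <> 0)%Z).
 { intros E. apply Hd. apply Z.mod_divide; lia. }
 set (m := (N mod (2 * p))%Z) in *. set (q := (N / (2*p))%Z).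
 assert (HN : N = (2 * p * q + m)%Z) by (apply Z_div_mod_eq_full).
 assert (Pp : 0 < IZR p) by (apply IZR_lt; auto).
 replace (PI * IZR N / (2 * IZR p)) with (PI * IZR m / (2 * IZR p) + PI * IZR q).
 2:{ clearbody m q. rewrite HN, plus_IZR, !mult_IZR. field. lra. }
 rewrite abs_cos_piZ.
 assert (H1 : 1 <= IZR m) by (apply IZR_le; lia).
 assert (H2 : IZR m <= 2 * IZR p - 1).
 { replace (2 * IZR p - 1) with (IZR (2*p - 1)) by (rewrite minus_IZR, mult_IZR; ring). apply IZR_le; lia. }
 pose proof PI_RGT_0.
 assert (A1 : PI / (2 * IZR p) <= PI * IZR m / (2 * IZR p)).
 { unfold Rdiv. apply Rmult_le_compat_r. left; apply Rinv_0_lt_compat; lra. nra. }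
 assert (A2 : PI * IZR m / (2 * IZR p) <= PI - PI / (2 * IZR p)).
 { replace (PI - PI / (2 * IZR p)) with (PI * (2 * IZR p - 1) / (2 * IZR p)) by (field; lra).
   unfold Rdiv. apply Rmult_le_compat_r. left; apply Rinv_0_lt_compat; lra. nra. }
 assert (A0 : 0 <= PI / (2 * IZR p)) by (unfold Rdiv; apply Rmult_le_pos; [lra| left; apply Rinv_0_lt_compat; lra]).
 apply Rabs_le. split.
 - assert (cos (PI - PI / (2 * IZR p)) = - cos (PI / (2 * IZR p))).
   { replace (PI - PI / (2 * IZR p)) with (- (PI / (2 * IZR p)) + PI) by ring. rewrite neg_cos, cos_neg; auto. }
   rewrite <- H0. apply cos_mono_le; lra.
 - apply cos_mono_le; lra. Qed.

Lemma fsum_const c n : fsum (fun _ => c) n = INR n * c.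
Proof. induction n; simpl fsum. simpl; lra. rewrite IHn, S_INR; lra. Qed.

Lemma tele phi n : 2 * sin (phi / 2) * fsum (fun r => cos (INR r * phi)) n
  = sin ((INR n - /2) * phi) + sin (phi / 2).
Proof. induction n; simpl fsum.
 - simpl INR. replace ((0 - /2) * phi) with (- (phi/2)) by field. rewrite sin_neg; lra.
 - rewrite Rmult_plus_distr_l, IHn. rewrite S_INR.
   replace ((INR n - /2) * phi) with (INR n * phi - phi / 2) by field.
   replace ((INR n + 1 - /2) * phi) with (INR n * phi + phi / 2) by field.
   rewrite sin_minus, sin_plus. ring. Qed.

Lemma sum_cos (P : nat) (j : Z) : (1 <= P)%nat ->
  fsum (fun r => cos (2 * PI * INR r * IZR j / INR P)) P =
  if Z.eqb (j mod Z.of_nat P) 0 then INR P else 0.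
Proof. intros HP. assert (PP : 0 < INR P) by (apply lt_0_INR; lia).
 destruct (Z.eqb_spec (j mod Z.of_nat P) 0) as [E|E].
 - apply Z.mod_divide in E; [|lia]. destruct E as [q ->].
   rewrite (fsum_ext _ (fun _ => 1)). rewrite fsum_const; ring.
   intros i _. rewrite mult_IZR, <- INR_IZR_INZ.
   replace (2 * PI * INR i * (IZR q * INR P) / INR P) with (0 + 2 * PI * IZR (Z.of_nat i * q)).
   rewrite cos2piZ, cos_0; auto. rewrite mult_IZR, <- INR_IZR_INZ. field; lra.
 - set (phi := 2 * PI * IZR j / INR P).
   rewrite (fsum_ext _ (fun r => cos (INR r * phi))) by (intros; unfold phi; f_equal; field; lra).
   assert (Hs : sin (phi / 2) <> 0).
   { intros S. apply sin_eq_0_0 in S. destruct S as [k Hk]. apply E.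
     unfold phi in Hk. assert (IZR j = IZR k * INR P).
     { pose proof PI_RGT_0. apply (Rmult_eq_reg_l (PI / INR P)); [|apply Rgt_not_eq; unfold Rdiv; apply Rmult_gt_0_compat; auto; apply Rinv_0_lt_compat; auto].
       replace (PI / INR P * IZR j) with (2 * PI * IZR j / INR P / 2) by (field; lra). rewrite Hk. field. lra. }
     rewrite INR_IZR_INZ, <- mult_IZR in H. apply eq_IZR in H. rewrite H. apply Z.mod_mul. lia. }
   pose proof (tele phi P) as T.
   replace ((INR P - /2) * phi) with (- (phi/2) + 2 * PI * IZR j) in T.
   2:{ unfold phi. field. lra. }
   rewrite sin2piZ, sin_neg in T.
   apply (Rmult_eq_reg_l (2 * sin (phi / 2))). lra. lra. Qed.

Definition G (p s : Z) : R := if MM p s then -1 else 1.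

Lemma fsum_plus f g n : fsum (fun i => f i + g i) n = fsum f n + fsum g n.
Proof. induction n; simpl; [lra|]. rewrite IHn; lra. Qed.

Lemma fsum_comm (F : nat -> nat -> R) n m :
  fsum (fun r => fsum (fun k => F r k) m) n = fsum (fun k => fsum (fun r => F r k) n) m.
Proof. induction n; simpl. rewrite fsum_const; ring.
 rewrite IHn, <- fsum_plus; auto. Qed.

Lemma G_mod p s : (0 < p)%Z -> G p (s mod p) = G p s.
Proof. intros. unfold G, MM. rewrite Z.mod_mod by lia. auto. Qed.

Lemma dft p s : (0 < p)%Z ->
  IZR p * G p s = fsum (fun r => fsum (fun k => G p (Z.of_nat k) *
     cos (2 * PI * INR r * IZR (s - Z.of_nat k) / INR (Z.to_nat p))) (Z.to_nat p)) (Z.to_nat p).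
Proof. intros Hp. rewrite fsum_comm.
 set (P := Z.to_nat p). assert (HP : Z.of_nat P = p) by (apply Z2Nat.id; lia).
 rewrite (fsum_ext _ (fun k => if Nat.eqb k (Z.to_nat (s mod p)) then IZR p * G p s else 0)).
 - symmetry; apply fsum_single. pose proof (Z.mod_pos_bound s p Hp). lia.
 - intros k Hk. rewrite fsum_scal, sum_cos by lia. rewrite HP.
   pose proof (Z.mod_pos_bound s p Hp).
   destruct (Nat.eqb_spec k (Z.to_nat (s mod p))) as [E|E].
   + subst k. rewrite Z2Nat.id by lia. rewrite Zminus_mod, Z.mod_mod, Z.sub_diag by lia.
     simpl. rewrite G_mod by lia. rewrite <- HP at 2. rewrite INR_IZR_INZ. ring.
   + destruct (Z.eqb_spec ((s - Z.of_nat k) mod p) 0) as [E2|E2]; [|ring].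
     exfalso. apply E. apply Z.mod_divide in E2; [|lia]. destruct E2 as [c Hc].
     assert (s = c * p + Z.of_nat k)%Z by lia.
     rewrite H0, Z.add_comm, Z.mod_add by lia. rewrite Z.mod_small by lia. lia. Qed.

Lemma hsum w : fsum (fun k => if (k <=? w)%nat then 1 else -1) (2 * w + 1) = 1.
Proof.
 assert (H1 : forall n, (n <= w + 1)%nat -> fsum (fun k => if (k <=? w)%nat then 1 else -1) n = INR n).
 { induction n; intros; simpl fsum; [reflexivity|]. rewrite IHn by lia. rewrite S_INR.
   destruct (Nat.leb_spec n w); [lra|lia]. }
 assert (H2 : forall j, (j <= w)%nat -> fsum (fun k => if (k <=? w)%nat then 1 else -1) (w + 1 + j) = INR (w+1) - INR j).
 { induction j; intros. rewrite Nat.add_0_r, H1 by lia. simpl; lra.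
   replace (w + 1 + S j)%nat with (S (w + 1 + j)) by lia. simpl fsum. rewrite IHj by lia.
   destruct (Nat.leb_spec (w + 1 + j) w); [lia|]. rewrite S_INR; lra. }
 replace (2 * w + 1)%nat with (w + 1 + w)%nat by lia. rewrite H2 by lia. rewrite plus_INR; simpl; lra. Qed.

Lemma Gsum p : (0 < p)%Z -> Z.odd p = true -> fsum (fun k => G p (Z.of_nat k)) (Z.to_nat p) = 1.
Proof. intros Hp Ho.
 destruct (Z.odd_spec p) as [Hd _]. destruct (Hd Ho) as [w Hw].
 assert (Hw0 : (0 <= w)%Z) by lia.
 replace (Z.to_nat p) with (2 * Z.to_nat w + 1)%nat by lia.
 rewrite <- (hsum (Z.to_nat w)). apply fsum_ext. intros k Hk.
 unfold G, MM. rewrite Z.mod_small by lia.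
 replace ((p - 1) / 2)%Z with w by (rewrite Hw; replace (2*w+1-1)%Z with (w*2)%Z by lia; rewrite Z.div_mul; lia).
 destruct (Z.leb_spec (Z.of_nat k) w); destruct (Nat.leb_spec k (Z.to_nat w)); simpl; auto; lia. Qed.

Lemma nodiv p r a u s : prime p -> Z.odd p = true -> (3 <= p)%Z -> (1 <= r < p)%Z ->
  (1 <= a < p)%Z -> (s = 1 \/ s = -1)%Z -> ~ (2 * p | 2 * r * a + s * p * u)%Z.
Proof. intros Hpr Ho H3 Hr Ha Hs [c Hc].
 destruct (Z.odd u) eqn:Hu.
 - assert (Z.odd (2 * r * a + s * p * u) = Z.odd (c * (2 * p))) by now rewrite Hc.
   rewrite Z.odd_add, !Z.odd_mul, Hu, Ho in H.
   rewrite Bool.andb_false_r in H. destruct Hs as [Hs | Hs]; subst s; simpl in H; congruence.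
 -
   assert (Hev : Z.even u = true) by (rewrite <- Z.negb_odd, Hu; auto).
   apply Z.even_spec in Hev. destruct Hev as [v ->].
   assert (E : (r * a = p * (c - s * v))%Z) by nia.
   assert (Hd : (p | r * a)%Z) by (exists (c - s * v)%Z; lia).
   apply prime_mult in Hd; auto. destruct Hd as [Hd|Hd];
   apply Z.divide_pos_le in Hd; lia. Qed.

Definition rho (p : Z) := cos (PI / (2 * IZR p)).

Lemma rho_pos p : (1 <= p)%Z -> 0 <= rho p.
Proof. intros. unfold rho. apply cos_ge_0.
 - assert (0 < IZR p) by (apply IZR_lt; lia). pose proof PI_RGT_0.
   assert (0 <= PI / (2 * IZR p)) by (unfold Rdiv; apply Rmult_le_pos; [lra|left; apply Rinv_0_lt_compat; lra]). lra.
 - assert (1 <= IZR p) by (apply IZR_le; lia). pose proof PI_RGT_0.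
   unfold Rdiv. rewrite Rinv_mult. 
   assert (/ IZR p <= 1) by (rewrite <- Rinv_1; apply Rinv_le_contravar; lra).
   assert (0 < / IZR p) by (apply Rinv_0_lt_compat; lra). nra. Qed.

Lemma half_bound p t (a u : nat -> Z) (r k : nat) (s : Z) :
  prime p -> Z.odd p = true -> (3 <= p)%Z -> (1 <= Z.of_nat r < p)%Z -> (s = 1 \/ s = -1)%Z ->
  (forall i, (1 <= i <= t)%nat -> (1 <= a i < p)%Z) ->
  Rabs (lsum (fun x => cos (2 * PI * INR r * IZR (lin_form a t x - Z.of_nat k) / INR (Z.to_nat p)
        + IZR s * (PI * IZR (lin_form u t x)))) (bool_vectors t)) <= 2 ^ t * rho p ^ t.
Proof. intros Hpr Ho H3 Hr Hs Ha.
 assert (HP : INR (Z.to_nat p) = IZR p) by (rewrite INR_IZR_INZ, Z2Nat.id by lia; auto).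
 assert (Pp : 0 < IZR p) by (apply IZR_lt; lia).
 set (th := fun i => (2 * PI * INR r / IZR p) * IZR (a i) + (IZR s * PI) * IZR (u i)).
 set (phi := 2 * PI * INR r * (IZR (a O) - INR k) / IZR p + IZR s * PI * IZR (u O)).
 rewrite (lsum_ext _ (fun x => cos (phi + rlin th 1 x))).
 2:{ intros x Hx. apply bv_in in Hx. rewrite !lin_form_eq by auto. f_equal.
     unfold th. rewrite rlin_lin, <- !IZR_zlin, HP. unfold phi.
     rewrite minus_IZR, !plus_IZR, <- INR_IZR_INZ. field. lra. }
 eapply Rle_trans. apply cos_avg_bound. apply Rmult_le_compat_l. apply pow_le; lra.
 apply prodabs_le. apply rho_pos; lia.
 intros i Hi. unfold rho, th.
 replace ((2 * PI * INR r / IZR p * IZR (a i) + IZR s * PI * IZR (u i)) / 2)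
   with (PI * IZR (2 * Z.of_nat r * a i + s * p * u i) / (2 * IZR p)).
 2:{ rewrite plus_IZR, !mult_IZR, <- INR_IZR_INZ. field. lra. }
 apply cosN. lia. apply nodiv; auto. apply Ha; lia. Qed.

Lemma cos_prod A B : cos A * cos B = /2 * (cos (A + IZR 1 * B) + cos (A + IZR (-1) * B)).
Proof. replace (A + IZR (-1) * B) with (A + - B) by (simpl; ring). rewrite Rmult_1_l.
 rewrite !cos_plus, cos_neg, sin_neg. field. Qed.

Lemma T_bound p t (a u : nat -> Z) (r k : nat) :
  prime p -> Z.odd p = true -> (3 <= p)%Z -> (1 <= Z.of_nat r < p)%Z ->
  (forall i, (1 <= i <= t)%nat -> (1 <= a i < p)%Z) ->
  Rabs (lsum (fun x => cos (2 * PI * INR r * IZR (lin_form a t x - Z.of_nat k) / INR (Z.to_nat p))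
        * cos (PI * IZR (lin_form u t x))) (bool_vectors t)) <= 2 ^ t * rho p ^ t.
Proof. intros.
 rewrite (lsum_ext _ _ _ (fun x _ => cos_prod _ _)).
 rewrite lsum_scal, lsum_plus, Rabs_mult, Rabs_right by lra.
 eapply Rle_trans. apply Rmult_le_compat_l. lra. apply Rabs_triang.
 pose proof (half_bound p t a u r k 1 ltac:(auto) ltac:(auto) ltac:(auto) ltac:(auto) ltac:(auto) ltac:(auto)).
 pose proof (half_bound p t a u r k (-1) ltac:(auto) ltac:(auto) ltac:(auto) ltac:(auto) ltac:(auto) ltac:(auto)).
 lra. Qed.

Lemma fsum_mult_r f n c : fsum f n * c = fsum (fun i => f i * c) n.
Proof. induction n; simpl; [lra|]. rewrite <- IHn; lra. Qed.

Lemma G_abs p s : Rabs (G p s) = 1.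
Proof. unfold G; destruct (MM p s); [rewrite Rabs_left; lra | apply Rabs_R1]. Qed.

Lemma corr_bound p t (a u : nat -> Z) :
  prime p -> Z.odd p = true -> (3 <= p)%Z ->
  (forall i, (1 <= i <= t)%nat -> (1 <= a i < p)%Z) ->
  Rabs (lsum (fun x => G p (lin_form a t x) * cos (PI * IZR (lin_form u t x))) (bool_vectors t))
   <= 2 ^ t * (/ IZR p + IZR p * rho p ^ t).
Proof. intros Hpr Ho H3 Ha.
 set (P := Z.to_nat p).
 assert (HP : INR P = IZR p) by (unfold P; rewrite INR_IZR_INZ, Z2Nat.id by lia; auto).
 assert (Pp : 0 < IZR p) by (apply IZR_lt; lia).
 set (T := fun r k => lsum (fun x => cos (2 * PI * INR r * IZR (lin_form a t x - Z.of_nat k) / INR P)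
        * cos (PI * IZR (lin_form u t x))) (bool_vectors t)).
 rewrite (lsum_ext _ (fun x => / IZR p * fsum (fun r => fsum (fun k => G p (Z.of_nat k) *
      (cos (2 * PI * INR r * IZR (lin_form a t x - Z.of_nat k) / INR P)
        * cos (PI * IZR (lin_form u t x)))) P) P)).
 2:{ intros x _. replace (G p (lin_form a t x)) with (/ IZR p * (IZR p * G p (lin_form a t x))) by (field; lra).
     rewrite dft by lia. fold P. rewrite Rmult_assoc. f_equal. rewrite fsum_mult_r. apply fsum_ext; intros r _.
     rewrite fsum_mult_r. apply fsum_ext; intros k _. ring. }
 rewrite lsum_scal, lsum_fsum.
 rewrite (fsum_ext _ (fun r => fsum (fun k => G p (Z.of_nat k) * T r k) P)).
 2:{ intros r _. rewrite lsum_fsum. apply fsum_ext; intros k _. rewrite lsum_scal; auto. }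
 assert (HP1 : P = S (P - 1)) by (unfold P; lia).
 rewrite HP1, fsum_shift. rewrite <- HP1.
 set (V := lsum (fun x => cos (PI * IZR (lin_form u t x))) (bool_vectors t)).
 assert (HT0 : forall k, T O k = V).
 { intros k. unfold T, V. apply lsum_ext. intros x _.
   replace (2 * PI * INR 0 * IZR (lin_form a t x - Z.of_nat k) / INR P) with 0 by (simpl; field; lra).
   rewrite cos_0; ring. }
 rewrite (fsum_ext _ (fun k => V * G p (Z.of_nat k))) by (intros; rewrite HT0; ring).
 rewrite fsum_scal, Gsum; [|lia|auto]. rewrite Rmult_1_r.
 assert (HV : Rabs V <= 2 ^ t).
 { unfold V. eapply Rle_trans. apply (lsum_abs_le _ _ 1). intros; apply Rabs_le; apply COS_bound.
   rewrite bv_length, pow_INR, Rmult_1_r. right. f_equal. }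
 assert (HR : Rabs (fsum (fun i => fsum (fun k => G p (Z.of_nat k) * T (S i) k) P) (P - 1))
    <= INR (P - 1) * (INR P * (2 ^ t * rho p ^ t))).
 { apply fsum_abs_le. intros i Hi. apply fsum_abs_le. intros k Hk.
   rewrite Rabs_mult, G_abs, Rmult_1_l. apply T_bound; auto.
   split. lia. unfold P in Hi. lia. }
 rewrite Rabs_mult, Rabs_right by (left; apply Rinv_0_lt_compat; lra).
 eapply Rle_trans. apply Rmult_le_compat_l. left; apply Rinv_0_lt_compat; lra. apply Rabs_triang.
 assert (HP2 : INR (P - 1) <= IZR p) by (rewrite <- HP; apply le_INR; lia).
 assert (0 <= 2 ^ t * rho p ^ t) by (apply Rmult_le_pos; apply pow_le; [lra| apply rho_pos; lia]).
 rewrite HP in HR.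
 assert (INR (P - 1) * (IZR p * (2 ^ t * rho p ^ t)) <= IZR p * (IZR p * (2 ^ t * rho p ^ t))).
 { apply Rmult_le_compat_r; auto. apply Rmult_le_pos; lra. }
 assert (/ IZR p * (Rabs V + Rabs (fsum (fun i => fsum (fun k => G p (Z.of_nat k) * T (S i) k) P) (P - 1)))
   <= / IZR p * (2 ^ t + IZR p * (IZR p * (2 ^ t * rho p ^ t)))).
 { apply Rmult_le_compat_l. left; apply Rinv_0_lt_compat; lra. lra. }
 eapply Rle_trans. exact H1. right. field. lra. Qed.

Lemma cos_ub_eq a : cos_ub a = 1 - a^2/2 + a^4/24 - a^6/720 + a^8/40320.
Proof. unfold cos_ub, cos_approx, cos_term. 
 unfold sum_f_R0. rewrite !INR_IZR_INZ.
 replace (Z.of_nat (fact (2*0))) with 1%Z by reflexivity.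
 replace (Z.of_nat (fact (2*1))) with 2%Z by reflexivity.
 replace (Z.of_nat (fact (2*2))) with 24%Z by reflexivity.
 replace (Z.of_nat (fact (2*3))) with 720%Z by reflexivity.
 replace (Z.of_nat (fact (2*4))) with 40320%Z by (vm_compute; reflexivity).
 simpl pow. field. Qed.

Lemma exp_pow x n : exp x ^ n = exp (INR n * x).
Proof. induction n. simpl; rewrite Rmult_0_l, exp_0; auto.
 rewrite S_INR; simpl pow; rewrite IHn, <- exp_plus; f_equal; ring. Qed.

Lemma rho_bound p : (3 <= p)%Z -> rho p <= exp (- (9 / (16 * IZR p ^ 2))).
Proof. intros H3. assert (Hp : 3 <= IZR p) by (apply IZR_le; lia).
 pose proof PI2_3_2. pose proof PI_4.
 set (y := PI / (2 * IZR p)).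
 assert (Hy1 : 3 / (2 * IZR p) <= y) by (unfold y, Rdiv; apply Rmult_le_compat_r; [left; apply Rinv_0_lt_compat; lra|lra]).
 assert (Hy2 : y <= 4 / (2 * IZR p)) by (unfold y, Rdiv; apply Rmult_le_compat_r; [left; apply Rinv_0_lt_compat; lra|lra]).
 assert (Hy3 : 4 / (2 * IZR p) <= 1) by (apply Rmult_le_reg_r with (2 * IZR p); [lra|]; unfold Rdiv; rewrite Rmult_assoc, Rinv_l; lra).
 assert (Hy0 : 0 < 3 / (2 * IZR p)) by (unfold Rdiv; apply Rmult_lt_0_compat; [lra|apply Rinv_0_lt_compat; lra]).
 assert (Hc : rho p <= 1 - y ^ 2 / 4).
 { unfold rho. fold y. destruct (COS y) as [_ Hu]; [lra|lra|]. rewrite cos_ub_eq in Hu.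
   assert (0 <= y ^ 2 <= 1) by (split; nra).
   assert (y ^ 4 <= y ^ 2) by nra. assert (y^8 <= y^2) by nra. assert (0 <= y^6) by (apply pow_le; lra). lra. }
 assert (Hy : 9 / (4 * IZR p ^ 2) <= y ^ 2).
 { replace (9 / (4 * IZR p ^ 2)) with ((3 / (2 * IZR p)) ^ 2) by (field; lra). apply pow_incr; lra. }
 eapply Rle_trans. exact Hc. eapply Rle_trans. 2: apply exp_ineq1_le.
 replace (9 / (16 * IZR p ^ 2)) with (9 / (4 * IZR p ^ 2) / 4) by (field; lra). lra. Qed.

Lemma err_bound p t c3 : (3 <= p)%Z -> 0 < c3 -> c3 * IZR p ^ 3 <= INR t ->
  IZR p * rho p ^ t <= 4 / ((9 * c3 / 16) ^ 2 * IZR p).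
Proof. intros H3 Hc Ht. assert (Hp : 3 <= IZR p) by (apply IZR_le; lia).
 set (k := 9 * c3 / 16). assert (Hk : 0 < k) by (unfold k; lra).
 assert (R1 : rho p ^ t <= exp (- (k * IZR p))).
 { eapply Rle_trans. apply pow_incr. split. apply rho_pos; lia. apply rho_bound; auto.
   rewrite exp_pow. destruct (Req_dec (INR t * - (9 / (16 * IZR p ^ 2))) (- (k * IZR p))) as [E|E]. rewrite E; lra.
   left. apply exp_increasing.
   assert (INR t * (9 / (16 * IZR p ^ 2)) >= c3 * IZR p ^ 3 * (9 / (16 * IZR p ^ 2))).
   { apply Rle_ge, Rmult_le_compat_r; auto. unfold Rdiv; apply Rmult_le_pos; [lra|left; apply Rinv_0_lt_compat; nra]. }
   replace (c3 * IZR p ^ 3 * (9 / (16 * IZR p ^ 2))) with (k * IZR p) in H by (unfold k; field; lra). lra. }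
 assert (E2 : (k * IZR p) ^ 2 / 4 <= exp (k * IZR p)).
 { replace (k * IZR p) with (2 * (k * IZR p / 2)) at 2 by field.
   replace (2 * (k * IZR p / 2)) with ((k * IZR p / 2) + (k * IZR p / 2)) by ring. rewrite exp_plus.
   pose proof (exp_ineq1_le (k * IZR p / 2)). assert (0 < k * IZR p) by nra. nra. }
 assert (0 < k * IZR p) by nra.
 assert (Hpos : 0 < exp (k * IZR p)) by apply exp_pos.
 rewrite exp_Ropp in R1.
 assert (IZR p * rho p ^ t <= IZR p * / exp (k * IZR p)) by (apply Rmult_le_compat_l; lra).
 eapply Rle_trans. exact H0.
 replace (4 / (k ^ 2 * IZR p)) with (IZR p * / ((k * IZR p) ^ 2 / 4)) by (field; lra).
 apply Rmult_le_compat_l. lra. apply Rinv_le_contravar. nra. auto. Qed.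

Lemma lsum_const c l : lsum (fun _ => c) l = INR (length l) * c.
Proof. induction l. unfold lsum; simpl; ring. unfold lsum in *; cbn [fold_right length].
 rewrite IHl, S_INR; ring. Qed.

Lemma prob_lower p t (a u : nat -> Z) b :
  prime p -> Z.odd p = true -> (3 <= p)%Z ->
  (forall i, (1 <= i <= t)%nat -> (1 <= a i < p)%Z) ->
  prob_unif t (fun x => Bool.eqb (xorb (MM p (lin_form a t x)) (Z.odd (lin_form u t x))) b)
   >= 1/2 - (/ IZR p + IZR p * rho p ^ t) / 2.
Proof. intros Hpr Ho H3 Ha. unfold prob_unif. rewrite count_lsum.
 set (h := fun x => G p (lin_form a t x) * cos (PI * IZR (lin_form u t x))).
 set (sg := if b then -1 else 1).
 rewrite (lsum_ext _ (fun x => /2 + (/2 * sg) * h x)).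
 2:{ intros x _. unfold h, sg, G. rewrite cos_pi_Z.
     destruct (MM p (lin_form a t x)), (Z.odd (lin_form u t x)), b; simpl; lra. }
 rewrite lsum_plus, lsum_const, lsum_scal, bv_length, pow_INR.
 replace (INR 2) with 2 by reflexivity.
 pose proof (corr_bound p t a u Hpr Ho H3 Ha) as Hc. fold h in Hc.
 assert (Hs : Rabs sg = 1) by (unfold sg; destruct b; [rewrite Rabs_left; lra | apply Rabs_R1]).
 assert (H2 : 0 < 2 ^ t) by (apply pow_lt; lra).
 assert (Hb : Rabs (/2 * sg * lsum h (bool_vectors t)) <= / 2 * (2 ^ t * (/ IZR p + IZR p * rho p ^ t))).
 { rewrite !Rabs_mult, Hs, Rabs_right by lra. nra. }
 set (X := / 2 * sg * lsum h (bool_vectors t)) in *.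
 pose proof (Rle_abs (- X)) as HX. rewrite Rabs_Ropp in HX.
 apply Rle_ge. replace ((2 ^ t * / 2 + X) / 2 ^ t) with (/2 + X * / 2 ^ t) by (field; lra).
 assert (- X * / 2 ^ t <= / 2 * (/ IZR p + IZR p * rho p ^ t)).
 { apply Rmult_le_reg_r with (2 ^ t). lra. rewrite Rmult_assoc, Rinv_l by lra. lra. }
 lra. Qed.

Lemma prime_odd p : prime p -> p <> 2%Z -> Z.odd p = true.
Proof. intros Hp H2. destruct (Z.odd p) eqn:E; auto. exfalso.
 assert (Hev : Z.even p = true) by (rewrite <- Z.negb_odd, E; auto).
 apply Z.even_spec in Hev. destruct Hev as [w Hw].
 assert (Hd : (2 | p)%Z) by (exists w; lia).
 destruct Hp as [Hp1 Hp2]. pose proof (prime_divisors p (prime_intro p Hp1 Hp2) 2 Hd). lia. Qed.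

Theorem lemma5p4 (alpha c1 c2 c3 c4 : R) :
  0 < alpha < 1 -> 0 < c1 -> 0 < c2 -> 0 < c3 -> 0 < c4 ->
  exists (C : R) (n0 : nat), 0 < C /\
    forall (n : nat) (p : Z) (t : nat) (b : bool) (a u : nat -> Z),
      (n0 <= n)%nat ->
      prime p ->
      c1 * Rpower (INR n) alpha <= IZR p <= c2 * Rpower (INR n) alpha ->
      c3 * IZR p ^ 3 <= INR t ->
      (forall i : nat, (1 <= i <= t)%nat ->
         1 <= IZR (a i) <= c4 * IZR p / ln (INR n)) ->
      prob_unif t (fun x => Bool.eqb (xorb (MM p (lin_form a t x)) (Z.odd (lin_form u t x))) b)
        >= 1 / 2 - C / ln (INR n).
Proof. intros Hal Hc1 Hc2 Hc3 Hc4.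
 set (k := 9 * c3 / 16). assert (Hk : 0 < k) by (unfold k; lra).
 set (K1 := (1 + 4 / k ^ 2) / 2).
 assert (HK1 : 0 <= K1) by (unfold K1, Rdiv; assert (0 < / k ^ 2) by (apply Rinv_0_lt_compat; nra); nra).
 assert (Hac : 0 < alpha * c1) by nra.
 set (C := (K1 + 1) / (alpha * c1) + c4 + 1).
 assert (HC1 : (K1 + 1) / (alpha * c1) >= 0) by (unfold Rdiv; apply Rle_ge, Rmult_le_pos; [lra|left; apply Rinv_0_lt_compat; lra]).
 exists C, 2%nat. split. unfold C; lra.
 intros n p t b a u Hn Hpr [Hp1 Hp2] Ht Ha.
 assert (Hn2 : 1 < INR n) by (apply lt_1_INR; lia).
 set (L := ln (INR n)).
 assert (HL : 0 < L) by (unfold L; rewrite <- ln_1; apply ln_increasing; lra).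
 assert (Hpow : alpha * L <= Rpower (INR n) alpha) by (unfold Rpower; fold L; pose proof (exp_ineq1_le (alpha * L)); lra).
 assert (HpL : alpha * c1 * L <= IZR p) by nra.
 assert (Hprob0 : 0 <= prob_unif t (fun x => Bool.eqb (xorb (MM p (lin_form a t x)) (Z.odd (lin_form u t x))) b)).
 { unfold prob_unif, Rdiv. apply Rmult_le_pos. apply pos_INR. left; apply Rinv_0_lt_compat, pow_lt; lra. }
 assert (HCL : forall X, X * L <= C -> 1/2 - C / L <= 1/2 - X).
 { intros X HX. assert (X <= C / L). { apply Rmult_le_reg_r with L; auto. unfold Rdiv; rewrite Rmult_assoc, Rinv_l; lra. } lra. }
 destruct (Rle_lt_dec L c4) as [Hl4|Hl4].
 - apply Rle_ge. eapply Rle_trans. apply (HCL 1). unfold C; lra. lra.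
 - assert (Hp2' : (2 <= p)%Z) by (destruct Hpr; lia).
   destruct (Z.eq_dec p 2) as [E|E].
   + subst p. apply Rle_ge. eapply Rle_trans. apply (HCL (1/2)). 2: lra.
     assert (1 / (alpha * c1) * (alpha * c1 * L) <= 1 / (alpha * c1) * 2).
     { apply Rmult_le_compat_l. unfold Rdiv; rewrite Rmult_1_l; left; apply Rinv_0_lt_compat; lra. auto. }
     replace (1 / (alpha * c1) * (alpha * c1 * L)) with L in H by (field; lra).
     assert ((K1 + 1) / (alpha * c1) >= 1 / (alpha * c1)).
     { unfold Rdiv. apply Rle_ge, Rmult_le_compat_r. left; apply Rinv_0_lt_compat; lra. lra. }
     unfold C. lra.
   + assert (H3 : (3 <= p)%Z) by lia.
     assert (Hodd : Z.odd p = true) by (apply prime_odd; auto).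
     assert (Pp : 3 <= IZR p) by (apply IZR_le; lia).
     assert (Ha' : forall i, (1 <= i <= t)%nat -> (1 <= a i < p)%Z).
     { intros i Hi. destruct (Ha i Hi) as [A1 A2]. split. apply le_IZR; auto.
       apply lt_IZR. eapply Rle_lt_trans. exact A2. fold L.
       apply Rmult_lt_reg_r with L; auto. unfold Rdiv. rewrite Rmult_assoc, Rinv_l by lra. nra. }
     pose proof (prob_lower p t a u b Hpr Hodd H3 Ha') as HP.
     pose proof (err_bound p t c3 H3 Hc3 Ht) as HE. fold k in HE.
     apply Rge_trans with (1 := HP). apply Rle_ge.
     apply HCL.
     assert (E1 : (/ IZR p + IZR p * rho p ^ t) / 2 <= K1 / IZR p).
     { unfold K1. replace (4 / (k ^ 2 * IZR p)) with (4 / k^2 * / IZR p) in HE by (field; lra).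
       replace ((1 + 4 / k ^ 2) / 2 / IZR p) with ((/ IZR p + 4 / k^2 * / IZR p) / 2) by (field; lra). lra. }
     assert (E2 : K1 / IZR p * L <= K1 / (alpha * c1)).
     { apply Rmult_le_reg_r with (alpha * c1 * IZR p). nra.
       replace (K1 / IZR p * L * (alpha * c1 * IZR p)) with (K1 * (alpha * c1 * L)) by (field; lra).
       replace (K1 / (alpha * c1) * (alpha * c1 * IZR p)) with (K1 * IZR p) by (field; lra).
       apply Rmult_le_compat_l; auto. }
     assert (E3 : K1 / (alpha * c1) <= (K1 + 1) / (alpha * c1)).
     { unfold Rdiv. apply Rmult_le_compat_r. left; apply Rinv_0_lt_compat; lra. lra. }
     assert (0 <= (/ IZR p + IZR p * rho p ^ t) / 2).
     { assert (0 <= rho p ^ t) by (apply pow_le, rho_pos; lia).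
       assert (0 < / IZR p) by (apply Rinv_0_lt_compat; lra). nra. }
     unfold C. nra. Qed.
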